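(* Let $n\ge1$ and let $Q,Q'$ be key polynomials for $\nu$ of degree $n$ with $\nu(Q)<\nu(Q')$. For $f\in K[x]$ let $f=\sum_{i=0}^rf_iQ'^i$ be the $Q'$-expansion of $f$. Then \[ \nu_Q(f)=\min_{0\le i\le r}\nu_Q(f_iQ'^i). \]
   Context: Let $K$ be a field and $\nu$ a rank one valuation on $K[x]$ (values in $\mathbb{R}\cup\{\infty\}$). For $f\in K[x]$ and $b\ge 0$, $\partial_bf$ denotes the $b$-th Hasse derivative of $f$ (defined by $f(x+y)=\sum_b\partial_bf(x)y^b$). For nonconstant $f$ set $\epsilon(f)=\max_{1\le b\le\deg f}\frac{\nu(f)-\nu(\partial_bf)}{b}$ (with $\epsilon(c)=-\infty$ for constants $c$). A monic $Q\in K[x]$ is a key polynomial for $\nu$ if for every $f\in K[x]$, $\epsilon(f)\ge\epsilon(Q)$ implies $\deg f\ge\deg Q$. For a monic $Q$ of degree $n\ge1$, every $f\in K[x]$ has a unique $Q$-expansion $f=\sum_{i=0}^ra_iQ^i$ with $\deg a_i<n$, and the truncation is $\nu_Q(f)=\min_i\nu(a_iQ^i)$. *)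

(* Defs.v *)
From HB Require Import structures.
From mathcomp Require Import all_boot all_order all_algebra.
From mathcomp Require Import reals constructive_ereal.
Set Implicit Arguments. Unset Strict Implicit. Unset Printing Implicit Defensive.
Import Order.TTheory GRing.Theory Num.Theory.
Local Open Scope ring_scope.
Local Open Scope ereal_scope.

Section Defs.
Variables (K : fieldType) (R : realType).
Implicit Types (nu : {poly K} -> \bar R) (f Q : {poly K}).

Definition is_valuation nu : Prop :=
  [/\ nu 0%R = +oo, nu 1%R = 0,
      (forall f g, nu (f * g)%R = nu f + nu g),
      (forall f g, mine (nu f) (nu g) <= nu (f + g)%R) &
      (forall f, f != 0%R -> nu f \is a fin_num)].

(* epsilon(f) = max_{1 <= b <= deg f} (nu f - nu (d_b f)) / b, where d_b is the
   b-th Hasse derivative (mathcomp's normalized derivative p^`N(b)).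
   The empty max is -oo, so epsilon(c) = -oo for constants c. *)
Definition epsilon nu f : \bar R :=
  \big[maxe/-oo]_(1 <= b < size f)
     ((nu f - nu (f^`N(b))) * ((b%:R : R)^-1)%:E).

Definition key_poly nu Q : Prop :=
  Q \is monic /\
  forall f, epsilon nu Q <= epsilon nu f -> (size Q <= size f)%N.

(* i-th coefficient of the Q-expansion f = \sum_i a_i Q^i (deg a_i < deg Q). *)
Definition qexp Q f (i : nat) : {poly K} := (f %/ Q ^+ i) %% Q.

(* truncation nu_Q(f) = min_i nu(a_i Q^i); indices i >= size f give a_i = 0. *)
Definition trunc nu Q f : \bar R :=
  \big[mine/+oo]_(i < size f) nu (qexp Q f i * Q ^+ i)%R.

End Defs.

(* Main.v *)
Require Import Defs.
From HB Require Import structures.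
From mathcomp Require Import all_boot all_order all_algebra.
From mathcomp Require Import reals constructive_ereal.
From mathcomp Require Import ring lra zify.
Import Order.TTheory GRing.Theory Num.Theory.

Module A.
Local Open Scope ring_scope.

Section Leib.
Variable K : fieldType.

Definition Tay (a : {poly K}) : {poly {poly K}} := ((a^:P)^:P).[('X)%:P + 'X].

Lemma mapC_X (q : {poly K}) : (q^:P).['X] = q.
Proof. exact: comp_polyXr. Qed.

Lemma term_coef a (j i : nat) :
  ((((a^:P)^:P)^`N(j)).[('X : {poly K})%:P] * 'X^j)`_i = if i == j then a^`N(j) else 0.
Proof.
rewrite !nderivn_map horner_map /= mapC_X coefCM coefXn.
by case: eqP => _; rewrite ?mulr1 ?mulr0.
Qed.

Lemma Tay_coef a i : (Tay a)`_i = a^`N(i).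
Proof.
rewrite /Tay nderiv_taylor; last exact: mulrC.
rewrite coef_sum.
have [lt|ge] := ltnP i (size ((a^:P)^:P)).
- rewrite (bigD1 (Ordinal lt)) //= big1 ?addr0.
    by rewrite term_coef eqxx.
  move=> j /negbTE nj; rewrite term_coef.
  case: eqP => [e|] //.
  by move: nj; rewrite -(inj_eq val_inj) /= e eqxx.
- rewrite big1; last first.
    move=> j _; rewrite term_coef; case: eqP => [e|] //.
    by move: (ltn_ord j); rewrite -e ltnNge ge.
  by rewrite nderivn_poly0 // -(size_map_polyC a) -(size_map_polyC (a^:P)).
Qed.

Lemma TayM a b : Tay (a * b) = Tay a * Tay b.
Proof. by rewrite /Tay !rmorphM /= hornerM. Qed.

Lemma nderivnM (a b : {poly K}) j :
  (a * b)^`N(j) = \sum_(k < j.+1) a^`N(k) * b^`N(j - k).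
Proof. by rewrite -Tay_coef TayM coefM; apply: eq_bigr => k _; rewrite !Tay_coef. Qed.
End Leib.

End A.
Import A.

Module B.
Set Implicit Arguments. Unset Strict Implicit. Unset Printing Implicit Defensive.
Local Open Scope ring_scope.
Local Open Scope ereal_scope.

Section Val.
Variables (K : fieldType) (R : realType) (nu : {poly K} -> \bar R).
Hypothesis Hv : is_valuation nu.

Lemma nu0 : nu 0%R = +oo. Proof. by case: Hv. Qed.
Lemma nu1 : nu 1%R = 0. Proof. by case: Hv. Qed.
Lemma nuM p q : nu (p * q)%R = nu p + nu q. Proof. by case: Hv. Qed.
Lemma nuD p q : mine (nu p) (nu q) <= nu (p + q)%R. Proof. by case: Hv. Qed.
Lemma nufin p : (p != 0)%R -> nu p \is a fin_num. Proof. by case: Hv => _ _ _ _; apply. Qed.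

Lemma nuN1 : nu (-1)%R = 0.
Proof.
have h : nu (-1)%R + nu (-1)%R = 0 by rewrite -nuM mulrNN mulr1 nu1.
have f : nu (-1) \is a fin_num by apply: nufin; rewrite oppr_eq0 oner_eq0.
move: h f; case: (nu (-1)) => // r; rewrite -EFinD => /eqP; rewrite eqe => /eqP h _.
by congr EFin; apply: (@mulIf _ 2%:R); rewrite ?pnatr_eq0 // mul0r mulr_natr mulr2n.
Qed.

Lemma nuN p : nu (- p)%R = nu p.
Proof. by rewrite -mulN1r nuM nuN1 add0e. Qed.

Lemma nuEfin p : (p != 0)%R -> nu p = (fine (nu p))%:E.
Proof. by move=> /nufin /fineK ->. Qed.

Lemma lbD x p q : x <= nu p -> x <= nu q -> x <= nu (p + q)%R%R.
Proof. by move=> hp hq; apply: le_trans (nuD p q); rewrite le_min hp hq. Qed.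

Lemma slbD x p q : x < nu p -> x < nu q -> x < nu (p + q)%R%R.
Proof. by move=> hp hq; apply: lt_le_trans (nuD p q); rewrite lt_min hp hq. Qed.

Lemma lbN x p : x <= nu p -> x <= nu (- p)%R. Proof. by rewrite nuN. Qed.
Lemma slbN x p : x < nu p -> x < nu (- p)%R. Proof. by rewrite nuN. Qed.

Lemma lbB x p q : x <= nu p -> x <= nu q -> x <= nu (p - q)%R.
Proof. by move=> hp hq; apply: lbD => //; apply: lbN. Qed.
Lemma slbB x p q : x < nu p -> x < nu q -> x < nu (p - q)%R.
Proof. by move=> hp hq; apply: slbD => //; apply: slbN. Qed.

Lemma lb_sum (I : Type) (r : seq I) (P : pred I) (F : I -> {poly K}) x :
  (forall i, P i -> x <= nu (F i)) -> x <= nu (\sum_(i <- r | P i) F i)%R.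
Proof.
move=> h; elim/big_ind: _ => //; first by rewrite nu0 leey.
by move=> ? ? ? ?; apply: lbD.
Qed.

Lemma slb_sum (I : Type) (r : seq I) (P : pred I) (F : I -> {poly K}) (x : R) :
  (forall i, P i -> x%:E < nu (F i)) -> x%:E < nu (\sum_(i <- r | P i) F i)%R.
Proof.
move=> h; elim/big_ind: _ => //; first by rewrite nu0 ltey.
by move=> ? ? ? ?; apply: slbD.
Qed.

Lemma lbM (x y : R) p q : x%:E <= nu p -> y%:E <= nu q -> (x + y)%:E <= nu (p * q)%R.
Proof. by move=> hp hq; rewrite nuM EFinD; apply: leeD. Qed.

Lemma slbM (x y : R) p q : x%:E < nu p -> y%:E <= nu q -> (x + y)%:E < nu (p * q)%R.
Proof. by move=> hp hq; rewrite nuM EFinD; apply: lte_leD. Qed.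

Lemma slbM' (x y : R) p q : x%:E <= nu p -> y%:E < nu q -> (x + y)%:E < nu (p * q)%R.
Proof. by move=> hp hq; rewrite nuM EFinD; apply: lee_ltD. Qed.

Lemma nu_strict p q : nu p < nu q -> nu (p + q)%R = nu p.
Proof.
move=> lt; apply/le_anti/andP; split; last first.
  by apply: le_trans (nuD p q); rewrite le_min lexx (ltW lt).
have := nuD (p + q)%R (- q)%R; rewrite (addrK q p) nuN ge_min => /orP[//|h].
by move: (le_lt_trans h lt); rewrite ltxx.
Qed.

Lemma nu_eq0 p : nu p = +oo -> p = 0%R.
Proof. by move=> h; apply/eqP; apply: contraLR (isT : true) => /nufin; rewrite h. Qed.

End Val.

End B.
Import B.

Module C.
Set Implicit Arguments. Unset Strict Implicit. Unset Printing Implicit Defensive.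
Local Open Scope ring_scope.
Local Open Scope ereal_scope.

Section Eps.
Variables (K : fieldType) (R : realType) (nu : {poly K} -> \bar R).
Hypothesis Hv : is_valuation nu.

Definition w (p : {poly K}) : R := fine (nu p).

Definition term (g : {poly K}) (b : nat) : \bar R :=
  (nu g - nu (g^`N(b))) * ((b%:R : R)^-1)%:E.

Lemma eps_ge (g : {poly K}) b : (1 <= b < size g)%N -> term g b <= epsilon nu g.
Proof.
by move=> hb; rewrite /epsilon; apply: (@le_bigmax_seq _ _ _ _ _ b xpredT (term g)) => //; rewrite mem_index_iota.
Qed.

Lemma eps_attain (g : {poly K}) : (1 < size g)%N ->
  exists2 b, (1 <= b < size g)%N & epsilon nu g = term g b.
Proof.
rewrite /epsilon; move: (size g) => N.
elim: N => // N IH hN.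
rewrite big_nat_recr /=; last by case: (N) hN.
have [h1|h1] := eqVneq N 1%N.
  by rewrite h1 big_geq // maxEle leNye; exists 1%N.
have h2 : (1 < N)%N by move: hN h1; case: N {IH} => [|[|N]].
have [b hb ->] := IH h2.
rewrite maxEle; case: ifP => _.
  by exists N => //; rewrite leqnn andbT ltnW.
by exists b => //; case/andP: hb => -> /= /ltnW; rewrite ltnS.
Qed.

Lemma term_nz (g : {poly K}) b : (g != 0)%R -> (0 < b)%N -> (g^`N(b) != 0)%R ->
  term g b = (((w g - w (g^`N(b))) / b%:R)%R)%:E.
Proof.
move=> g0 b0 d0; rewrite /term /w (nuEfin Hv g0) (nuEfin Hv d0) /=.
by rewrite -EFinB -EFinM.
Qed.

Lemma term_z (g : {poly K}) b : (g != 0)%R -> (0 < b)%N -> g^`N(b) = 0%R -> term g b = -oo.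
Proof.
move=> g0 b0 d0; rewrite /term d0 (nu0 Hv) (nuEfin Hv g0) /=.
by rewrite gt0_mulNye // lte_fin invr_gt0 ltr0n.
Qed.

End Eps.

End C.
Import C.

Module D.
Set Implicit Arguments. Unset Strict Implicit. Unset Printing Implicit Defensive.
Local Open Scope ring_scope.
Local Open Scope ereal_scope.

Section Key.
Variables (K : fieldType) (R : realType) (nu : {poly K} -> \bar R).
Hypothesis Hv : is_valuation nu.
Variables (Q : {poly K}) (n : nat).
Hypotheses (HQk : key_poly nu Q) (HQs : size Q = n.+1) (Hn : (1 <= n)%N).

Implicit Types (g p a c : {poly K}).
Local Notation w := (C.w nu).
Local Notation term := (C.term nu).

Lemma Q0 : (Q != 0)%R.
Proof. by rewrite -size_poly_eq0 HQs. Qed.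

Lemma QNn : (Q^`N(n) = 1)%R.
Proof.
apply/polyP => i; rewrite coef_nderivn coef1.
have lc : Q`_n = 1%R by case: HQk => /monicP; rewrite /lead_coef HQs.
case: i => [|i] /=; first by rewrite addn0 binn lc.
by rewrite nth_default ?mul0rn // HQs addnS ltnS leq_addr.
Qed.

Lemma eps_small g : (size g <= n)%N -> epsilon nu g < epsilon nu Q.
Proof.
move=> hg; rewrite ltNge; apply/negP => /(proj2 HQk); rewrite HQs.
by move=> h; move: (leq_trans h hg); rewrite ltnn.
Qed.

Lemma termQn : term Q n = ((w Q / n%:R)%R)%:E.
Proof.
rewrite term_nz //; last 2 first.
- exact: Q0.
- by rewrite QNn oner_eq0.
by rewrite QNn /C.w (nu1 Hv) /= subr0.
Qed.

Lemma sQ : (1 < size Q)%N. Proof. by rewrite HQs ltnS. Qed.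

Lemma epsQ_fin : epsilon nu Q \is a fin_num.
Proof.
have [b hb e] := eps_attain nu sQ.
have hn : term Q n <= epsilon nu Q by apply: eps_ge; rewrite HQs Hn leqnn.
case/andP: hb => b1 _.
have [d0|d0] := eqVneq (Q^`N(b))%R 0%R.
  by move: hn; rewrite e (term_z Hv Q0 b1 d0) termQn leeNy_eq.
by rewrite e term_nz // Q0.
Qed.

Let e := fine (epsilon nu Q).
Lemma epsQE : epsilon nu Q = e%:E. Proof. by rewrite /e fineK // epsQ_fin. Qed.

Lemma nuE p : (p != 0)%R -> nu p = (w p)%:E.
Proof. exact: nuEfin. Qed.

Lemma term_lb g b (c : R) : (g != 0)%R -> (0 < b)%N -> term g b <= c%:E ->
  ((w g - b%:R * c)%R)%:E <= nu (g^`N(b)).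
Proof.
move=> g0 b0 h; have [d0|d0] := eqVneq (g^`N(b))%R 0%R.
  by rewrite d0 (nu0 Hv) leey.
move: h; rewrite term_nz // lee_fin (nuE d0) lee_fin.
rewrite ler_pdivrMr ?ltr0n // => h.
have : (w g - b%:R * c <= w g^`N(b))%R by rewrite mulrC; lra.
done.
Qed.

Lemma term_slb g b (c : R) : (g != 0)%R -> (0 < b)%N -> term g b < c%:E ->
  ((w g - b%:R * c)%R)%:E < nu (g^`N(b)).
Proof.
move=> g0 b0 h; have [d0|d0] := eqVneq (g^`N(b))%R 0%R.
  by rewrite d0 (nu0 Hv) ltey.
move: h; rewrite term_nz // lte_fin (nuE d0) lte_fin.
rewrite ltr_pdivrMr ?ltr0n // => h.
rewrite mulrC; lra.
Qed.

Lemma lbQ b : ((w Q - b%:R * e)%R)%:E <= nu (Q^`N(b)).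
Proof.
case: b => [|b].
  by rewrite nderivn0 (nuE Q0) mul0r subr0.
have [hb|hb] := leqP b.+1 n.
  by apply: term_lb => //; [exact: Q0 | rewrite -epsQE; apply: eps_ge; rewrite HQs; lia].
by rewrite nderivn_poly0 ?(nu0 Hv) ?leey // HQs.
Qed.

Lemma slb_small g b : (size g <= n)%N -> (g != 0)%R -> (0 < b)%N ->
  ((w g - b%:R * e)%R)%:E < nu (g^`N(b)).
Proof.
move=> sg g0 b0.
have [hb|hb] := ltnP b (size g).
  apply: term_slb => //; rewrite -epsQE.
  by apply: le_lt_trans (eps_small sg); apply: eps_ge; rewrite b0.
by rewrite nderivn_poly0 ?(nu0 Hv) ?ltey.
Qed.

Lemma lb_small g b : (size g <= n)%N -> (g != 0)%R ->
  ((w g - b%:R * e)%R)%:E <= nu (g^`N(b)).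
Proof.
move=> sg g0; case: b => [|b]; first by rewrite nderivn0 (nuE g0) mul0r subr0.
exact/ltW/slb_small.
Qed.

Lemma exb0 : exists b, [&& (0 < b)%N, (b <= n)%N & term Q b == epsilon nu Q].
Proof.
have [b hb e'] := eps_attain nu sQ.
by exists b; move: hb; rewrite HQs ltnS e' eqxx andbT.
Qed.

Let b0 := ex_minn exb0.

Lemma b0P : [/\ (0 < b0)%N, (b0 <= n)%N, term Q b0 = epsilon nu Q &
   forall b, (0 < b)%N -> (b <= n)%N -> term Q b = epsilon nu Q -> (b0 <= b)%N].
Proof.
rewrite /b0; case: ex_minnP => m /and3P[h1 h2 /eqP h3] hmin; split => //.
by move=> b p1 p2 p3; apply: hmin; rewrite p1 p2 p3 eqxx.
Qed.

Lemma nuQb0 : nu (Q^`N(b0)) = ((w Q - b0%:R * e)%R)%:E.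
Proof.
case: b0P => h1 h2 h3 _.
have [d0|d0] := eqVneq (Q^`N(b0))%R 0%R.
  by move: h3; rewrite term_z ?Q0 // epsQE.
move: h3; rewrite term_nz ?Q0 // epsQE => /eqP; rewrite eqe => /eqP h.
rewrite (nuE d0); congr EFin.
have hb : (b0%:R : R) != 0%R by rewrite pnatr_eq0 -lt0n.
rewrite -h; field; done.
Qed.

Lemma slbQ b : (0 < b)%N -> (b < b0)%N -> ((w Q - b%:R * e)%R)%:E < nu (Q^`N(b)).
Proof.
move=> bp bl; case: b0P => h1 h2 h3 hmin.
apply: term_slb => //; first exact: Q0.
rewrite -epsQE lt_neqAle; apply/andP; split.
  apply/eqP => ht; have := hmin b bp (leq_trans (ltnW bl) h2) ht.
  by rewrite leqNgt bl.
by apply: eps_ge; rewrite bp HQs ltnS (leq_trans (ltnW bl) h2).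
Qed.

Lemma Leib_small a c j : (size a <= n)%N -> (size c <= n)%N -> (a != 0)%R -> (c != 0)%R ->
  (0 < j)%N -> ((w a + w c - j%:R * e)%R)%:E < nu ((a * c)^`N(j))%R.
Proof.
move=> sa sc a0 c0 j0; rewrite nderivnM; apply: (slb_sum Hv) => // -[[|k] hk] _ /=.
  rewrite nderivn0 subn0.
  have -> : (w a + w c - j%:R * e = w a + (w c - j%:R * e))%R by ring.
  by apply: slbM' => //; [rewrite (nuE a0) | apply: slb_small].
have hkj : (k.+1 <= j)%N by rewrite -ltnS.
have -> : (w a + w c - j%:R * e = (w a - k.+1%:R * e) + (w c - (j - k.+1)%:R * e))%R.
  by rewrite natrB //; ring.
by apply: slbM => //; [apply: slb_small | apply: lb_small].
Qed.

Lemma KL a c : (size a <= n)%N -> (size c <= n)%N -> (a * c != 0)%R ->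
  nu a + nu c < nu ((a * c %/ Q) * Q)%R.
Proof.
move=> sa sc ac0.
have a0 : (a != 0)%R by apply: contraNneq ac0 => ->; rewrite mul0r.
have c0 : (c != 0)%R by apply: contraNneq ac0 => ->; rewrite mulr0.
set q := (a * c %/ Q)%R.
rewrite ltNge; apply/negP; rewrite (nuE a0) (nuE c0) -EFinD => hle.
have q0 : (q != 0)%R.
  by apply: contraTneq hle => ->; rewrite mul0r (nu0 Hv) leye_eq.
have sq : (size q <= n)%N.
  rewrite /q size_divp; last exact: Q0.
  rewrite HQs /=.
  apply: leq_trans (leq_sub2r n (size_polyMleq a c)) _; rewrite -subn1; lia.
have hqQ : nu (q * Q)%R = ((w q + w Q)%R)%:E by rewrite (nuM Hv) (nuE q0) (nuE Q0).
have hle' : (w q + w Q <= w a + w c)%R by rewrite -lee_fin -hqQ.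
set X := (w q + w Q - b0%:R * e)%R.
case: b0P => hb1 hb2 hb3 hbmin.
have hD : nu ((q * Q)^`N(b0))%R = X%:E.
  rewrite nderivnM big_ord_recl /= nderivn0 subn0 (nu_strict Hv).
    by rewrite (nuM Hv) nuQb0 (nuE q0) /X -EFinD; congr EFin; ring.
  rewrite (nuM Hv) nuQb0 (nuE q0) -EFinD.
  have -> : (w q + (w Q - b0%:R * e) = X)%R by rewrite /X; ring.
  apply: (slb_sum Hv) => i _ /=; rewrite /bump /= add1n.
  have hi : (i.+1 <= b0)%N by [].
  have -> : (X = (w q - i.+1%:R * e) + (w Q - (b0 - i.+1)%:R * e))%R.
    by rewrite natrB // /X; ring.
  by apply: (slbM Hv); [apply: slb_small | apply: lbQ].
have hab : X%:E < nu ((a * c)^`N(b0))%R.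
  apply: le_lt_trans (Leib_small sa sc a0 c0 hb1).
  by rewrite lee_fin /X; lra.
set r := (a * c %% Q)%R.
have rdef : r = (a * c - q * Q)%R by rewrite /r /q {2}(divp_eq (a * c) Q) addrAC subrr add0r.
have hr : nu (r^`N(b0))%R = X%:E.
  by rewrite rdef nderivnB addrC (nu_strict Hv) (nuN Hv) // hD.
have rd0 : (r^`N(b0) != 0)%R by apply: contra_eq_neq hr => ->; rewrite (nu0 Hv).
have r0 : (r != 0)%R by apply: contraNneq rd0 => ->; rewrite nderivn_poly0 // size_poly0.
have hsr : (b0 < size r)%N.
  rewrite ltnNge; apply/negP => h; move/eqP: rd0; apply; exact: nderivn_poly0.
have hrlb : ((w q + w Q)%R)%:E <= nu r.
  rewrite rdef; apply: lbB => //; last by rewrite hqQ.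
  by rewrite (nuM Hv) (nuE a0) (nuE c0) -EFinD lee_fin.
have hwr : (w q + w Q <= w r)%R by rewrite -lee_fin -(nuE r0).
have ht : e%:E <= term r b0.
  rewrite term_nz // /C.w hr /= lee_fin ler_pdivlMr ?ltr0n //.
  by rewrite -/(C.w nu r) /X; lra.
have := le_trans ht (eps_ge nu (_ : (1 <= b0 < size r)%N)).
rewrite hb1 hsr -epsQE => /(_ isT) /(proj2 HQk).
by rewrite leqNgt ltn_modp Q0.
Qed.

Lemma KLr a c : (size a <= n)%N -> (size c <= n)%N ->
  nu a + nu c <= nu ((a * c) %% Q)%R.
Proof.
move=> sa sc.
have [ac0|ac0] := eqVneq (a * c)%R 0%R.
  by rewrite ac0 mod0p (nu0 Hv) leey.
have -> : (a * c %% Q = a * c - (a * c %/ Q) * Q)%R.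
  by rewrite [X in (_ = X - _)%R](divp_eq (a * c) Q) addrAC subrr add0r.
rewrite -(nuM Hv); apply: (lbB Hv) => //; apply: ltW; rewrite (nuM Hv); exact: KL.
Qed.

End Key.

End D.
Import D.

Module E.
Set Implicit Arguments. Unset Strict Implicit. Unset Printing Implicit Defensive.
Local Open Scope ring_scope.

Section Exp.
Variables (K : fieldType) (Q : {poly K}) (n : nat).
Hypotheses (HQs : size Q = n.+1) (Hn : (1 <= n)%N).
Implicit Types (f g P h c : {poly K}).

Lemma Q0' : Q != 0. Proof. by rewrite -size_poly_eq0 HQs. Qed.

Lemma qexp0 f : qexp Q f 0 = f %% Q.
Proof. by rewrite /qexp expr0 divp1. Qed.

Lemma qexpS f k : qexp Q f k.+1 = qexp Q (f %/ Q) k.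
Proof. by rewrite /qexp divp_divl exprS. Qed.

Lemma qexpD f g k : qexp Q (f + g) k = qexp Q f k + qexp Q g k.
Proof. by rewrite /qexp divpD modpD. Qed.

Lemma qexpN f k : qexp Q (- f) k = - qexp Q f k.
Proof. by rewrite /qexp divpN modpN. Qed.

Lemma qexp_sum (I : Type) (r : seq I) (P : pred I) (F : I -> {poly K}) k :
  qexp Q (\sum_(i <- r | P i) F i) k = \sum_(i <- r | P i) qexp Q (F i) k.
Proof.
elim/big_rec2: _ => [|i y1 y2 _ <-]; last by rewrite qexpD.
by rewrite /qexp div0p mod0p.
Qed.

Lemma qexp_small c k : (size c <= n)%N -> qexp Q c k = if k == 0%N then c else 0.
Proof.
move=> sc; case: k => [|k]; first by rewrite qexp0 modp_small // HQs.
by rewrite qexpS divp_small ?HQs // /qexp div0p mod0p.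
Qed.

Lemma size_qexp f k : (size (qexp Q f k) <= n)%N.
Proof. by rewrite -ltnS -HQs ltn_modp Q0'. Qed.

Lemma qexp_MQ f k : qexp Q (f * Q) k = if k is k'.+1 then qexp Q f k' else 0.
Proof.
case: k => [|k]; first by rewrite qexp0 modp_mull.
by rewrite qexpS mulpK // Q0'.
Qed.

Lemma size_expQ k : size (Q ^+ k) = (n * k).+1.
Proof.
have := size_exp Q k; rewrite HQs /= => <-.
by rewrite prednK // lt0n size_poly_eq0 expf_neq0 // Q0'.
Qed.

Lemma qexp_big f k : (size f <= k)%N -> qexp Q f k = 0.
Proof.
move=> sf; rewrite /qexp divp_small ?mod0p // size_expQ.
apply: leq_ltn_trans sf _; rewrite ltnS; apply: leq_pmull Hn.
Qed.

Lemma qexp_Mh P h k : (size h <= n)%N ->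
  qexp Q (P * h) k = (qexp Q P k * h) %% Q +
     (if k is k'.+1 then (qexp Q P k' * h) %/ Q else 0).
Proof.
move=> sh; elim: k P => [|k IH] P.
  by rewrite !qexp0 addr0 [in RHS]mulrC modp_mul mulrC.
rewrite qexpS.
have e : (P * h) %/ Q = (P %/ Q) * h + (qexp Q P 0 * h) %/ Q.
  rewrite qexp0; set p0 := P %% Q; set q0 := (p0 * h) %/ Q; set r0 := (p0 * h) %% Q.
  have E1 : P = P %/ Q * Q + p0 by apply: divp_eq.
  have E2 : p0 * h = q0 * Q + r0 by apply: divp_eq.
  have E3 : P * h = ((P %/ Q) * h + q0) * Q + r0.
    have -> : ((P %/ Q) * h + q0) * Q + r0 = (P %/ Q * Q) * h + (q0 * Q + r0) by ring.
    by rewrite -E2 -mulrDl -E1.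
  by rewrite E3 divp_addl_mul_small // ltn_modp Q0'.
have sq0 : (size ((qexp Q P 0 * h) %/ Q)%R <= n)%N.
  rewrite size_divp ?Q0' // HQs /=.
  apply: leq_trans (leq_sub2r n (size_polyMleq _ _)) _.
  have := size_qexp P 0; rewrite -subn1; lia.
rewrite e qexpD IH (qexp_small k sq0) -!qexpS.
by case: k IH => [|k] _ /=; rewrite ?addr0 ?add0r -?qexpS ?addr0.
Qed.

Lemma recon_gen f N : f = \sum_(i < N) qexp Q f i * Q ^+ i + (f %/ Q ^+ N) * Q ^+ N.
Proof.
elim: N => [|N IH]; first by rewrite big_ord0 add0r expr0 divp1 mulr1.
rewrite big_ord_recr /= {1}IH -addrA; congr (_ + _).
rewrite [in LHS](divp_eq (f %/ Q ^+ N) Q) divp_divl -exprSr exprS /qexp; ring.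
Qed.

Lemma recon f : f = \sum_(i < size f) qexp Q f i * Q ^+ i.
Proof.
rewrite {1}(recon_gen f (size f)) divp_small ?mul0r ?addr0 // size_expQ.
rewrite ltnS; apply: leq_pmull Hn.
Qed.

End Exp.

End E.
Import E.

Module F.
Set Implicit Arguments. Unset Strict Implicit. Unset Printing Implicit Defensive.
Local Open Scope ring_scope.
Local Open Scope ereal_scope.

Section Dig.
Variables (K : fieldType) (R : realType) (nu : {poly K} -> \bar R).
Hypothesis Hv : is_valuation nu.
Variables (Q : {poly K}) (n : nat).
Hypotheses (HQk : key_poly nu Q) (HQs : size Q = n.+1) (Hn : (1 <= n)%N).
Variable h : {poly K}.
Hypotheses (sh : (size h <= n)%N) (h0 : (h != 0)%R) (hwh : (C.w nu Q <= C.w nu h)%R).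
Implicit Types (g p d x : {poly K}).
Local Notation w := (C.w nu).

Lemma nuE' p : (p != 0)%R -> nu p = (w p)%:E.
Proof. exact: nuEfin. Qed.

Lemma QQ0 : (Q != 0)%R. Proof. exact: (Q0' HQs). Qed.

Lemma nuQk k : nu (Q ^+ k)%R = ((k%:R * w Q)%R)%:E.
Proof.
elim: k => [|k IH]; first by rewrite expr0 (nu1 Hv) mul0r.
by rewrite exprS (nuM Hv) IH (nuE' QQ0) -EFinD -natr1; congr EFin; ring.
Qed.

Lemma nu_dig x k : nu (x * Q ^+ k)%R = nu x + ((k%:R * w Q)%R)%:E.
Proof. by rewrite (nuM Hv) nuQk. Qed.

Lemma Hmod d (y : R) : (size d <= n)%N -> y%:E <= nu d -> ((y + w Q)%R)%:E <= nu ((d * h) %% Q)%R.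
Proof.
move=> sd hd; apply: le_trans (KLr Hv HQk HQs Hn sd sh).
by rewrite EFinD (nuE' h0); apply: leeD.
Qed.

Lemma Hmod_s d (y : R) : (size d <= n)%N -> y%:E < nu d -> ((y + w Q)%R)%:E < nu ((d * h) %% Q)%R.
Proof.
move=> sd hd; apply: lt_le_trans (KLr Hv HQk HQs Hn sd sh).
by rewrite EFinD (nuE' h0); apply: lte_leD.
Qed.

Lemma Hdiv d (y : R) : (size d <= n)%N -> y%:E <= nu d -> y%:E < nu ((d * h) %/ Q)%R.
Proof.
move=> sd hd.
have [dh0|dh0] := eqVneq (d * h)%R 0%R.
  by rewrite dh0 div0p (nu0 Hv) ltey.
have := KL Hv HQk HQs Hn sd sh dh0.
rewrite (nuM Hv) (nuE' QQ0) (nuE' h0) => hk.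
have : (y + w Q)%:E < nu ((d * h) %/ Q)%R + (w Q)%:E.
  apply: le_lt_trans hk; rewrite EFinD; apply: leeD => //.
by rewrite EFinD lteD2rE.
Qed.

Definition L (g : {poly K}) (i k : nat) : R := (w g + (i%:R - k%:R) * w Q)%R.

Lemma LS g i k : L g i.+1 k.+1 = L g i k.
Proof. by rewrite /L -!natr1; ring. Qed.

Lemma LS0 g i k : (L g i k + w Q)%R = L g i.+1 k.
Proof. by rewrite /L -!natr1; ring. Qed.

Lemma digits g i : (size g <= n)%N -> (g != 0)%R ->
  [/\ forall k, (L g i k)%:E <= nu (qexp Q (g * (Q + h) ^+ i) k),
      forall k, (i < k)%N -> (L g i k)%:E < nu (qexp Q (g * (Q + h) ^+ i) k) &
      (w g)%:E < nu (qexp Q (g * (Q + h) ^+ i) i - g)%R].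
Proof.
move=> sg g0; elim: i => [|i [IHa IHb IHc]].
  rewrite expr0 mulr1; split.
  - move=> k; rewrite (qexp_small HQs) //; case: eqP => [->|_].
      by rewrite (nuE' g0) /L subrr mul0r addr0.
    by rewrite (nu0 Hv) leey.
  - by move=> k k0; rewrite (qexp_small HQs) // (negbTE (lt0n_neq0 k0)) (nu0 Hv) ltey.
  - by rewrite (qexp_small HQs) // eqxx subrr (nu0 Hv) ltey.
have eP : (g * (Q + h) ^+ i.+1 = (g * (Q + h) ^+ i) * Q + (g * (Q + h) ^+ i) * h)%R.
  by rewrite exprSr mulrA mulrDr.
set P := (g * (Q + h) ^+ i)%R.
have sd k : (size (qexp Q P k) <= n)%N by apply: size_qexp.
have dE k : qexp Q (g * (Q + h) ^+ i.+1) k =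
   ((if k is k'.+1 then qexp Q P k' else 0) + (qexp Q P k * h) %% Q +
     (if k is k'.+1 then (qexp Q P k' * h) %/ Q else 0))%R.
  by rewrite eP qexpD (qexp_MQ HQs) (qexp_Mh HQs) // addrA.
split.
- move=> [|k]; rewrite dE.
    rewrite add0r addr0 -LS0; exact: Hmod.
  apply: (lbD Hv); first apply: (lbD Hv).
  + by rewrite LS.
  + by rewrite -LS0; apply: Hmod.
  + by rewrite LS; apply/ltW/Hdiv.
- move=> [|k] // hk; rewrite dE.
  apply: (slbD Hv); first apply: (slbD Hv).
  + by rewrite LS; apply: IHb.
  + by rewrite -LS0; apply: Hmod_s => //; apply: IHb; apply: ltnW.
  + by rewrite LS; apply: Hdiv.
- rewrite dE.
  have -> : ((qexp Q P i + (qexp Q P i.+1 * h) %% Q + (qexp Q P i * h) %/ Q) - g =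
     (qexp Q P i - g) + (qexp Q P i.+1 * h) %% Q + (qexp Q P i * h) %/ Q)%R by ring.
  apply: (slbD Hv); first apply: (slbD Hv).
  + exact: IHc.
  + have -> : w g = (L g i i.+1 + w Q)%R by rewrite LS0 /L subrr mul0r addr0.
    by apply: Hmod_s => //; apply: IHb.
  + have -> : w g = L g i i by rewrite /L subrr mul0r addr0.
    exact: Hdiv.
Qed.

Lemma trunc_le f k : trunc nu Q f <= nu (qexp Q f k * Q ^+ k)%R.
Proof.
have [hk|hk] := ltnP k (size f).
  by rewrite /trunc; exact: (bigmin_le _ (Ordinal hk) (fun i : 'I_(size f) => nu (qexp Q f i * Q ^+ i)%R)).
by rewrite (qexp_big HQs Hn hk) mul0r (nu0 Hv) leey.
Qed.

Lemma trunc_ge (x : \bar R) f : (forall k, x <= nu (qexp Q f k * Q ^+ k)%R) -> x <= trunc nu Q f.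
Proof. by move=> hx; rewrite /trunc; apply: le_bigmin => [|i _]; [exact: leey | exact: hx]. Qed.

Lemma trunc0 : trunc nu Q 0%R = +oo.
Proof. by rewrite /trunc size_poly0 big_ord0. Qed.

Lemma Sterm g i : (size g <= n)%N -> trunc nu Q (g * (Q + h) ^+ i)%R = nu (g * Q ^+ i)%R.
Proof.
move=> sg; have [->|g0] := eqVneq g 0%R.
  by rewrite !mul0r trunc0 (nu0 Hv).
have [Ha Hb Hc] := digits i sg g0.
set P := (g * (Q + h) ^+ i)%R.
rewrite nu_dig (nuE' g0) -EFinD.
apply/le_anti/andP; split.
  apply: le_trans (trunc_le _ i) _.
  have -> : qexp Q P i = (g + (qexp Q P i - g))%R by rewrite addrC subrK.
  rewrite nu_dig (nu_strict Hv) ?(nuE' g0) //.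
apply: trunc_ge => k; rewrite nu_dig.
apply: le_trans (leeD (Ha k) (lexx _)).
rewrite -EFinD; have -> : (L g i k + k%:R * w Q = w g + i%:R * w Q)%R by rewrite /L; ring.
done.
Qed.

Lemma qexp0p k : qexp Q 0%R k = 0%R.
Proof. by rewrite /qexp div0p mod0p. Qed.

Lemma Gsum N (gs : nat -> {poly K}) : (forall i, (size (gs i) <= n)%N) ->
  trunc nu Q (\sum_(i < N) gs i * (Q + h) ^+ i)%R =
  \big[mine/+oo]_(i < N) nu (gs i * Q ^+ i)%R.
Proof.
move=> sgs; set m := \big[mine/+oo]_(i < N) _.
have mle i : (i < N)%N -> m <= nu (gs i * Q ^+ i)%R.
  by move=> hi; exact: (bigmin_le _ (Ordinal hi) (fun i : 'I_N => nu (gs i * Q ^+ i)%R)).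
apply/le_anti/andP; split; last first.
  apply: trunc_ge => k; rewrite qexp_sum big_distrl /=.
  apply: (lb_sum Hv) => i _.
  by apply: le_trans (mle i (ltn_ord i)) _; rewrite -Sterm //; apply: trunc_le.
have [->|mfin] := eqVneq m +oo; first exact: leey.
have N0 : (0 < N)%N by move: mfin; rewrite /m; case: (N) => //; rewrite big_ord0 eqxx.
have [i0 _ hi0] := @eq_bigmin _ _ _ +oo (Ordinal N0) xpredT
   (fun i : 'I_N => nu (gs i * Q ^+ i)%R) isT (fun i _ => leey _).
have exP : exists i, (i < N)%N && (nu (gs i * Q ^+ i)%R == m).
  by exists i0; rewrite ltn_ord /m hi0 eqxx.
have bnd : forall i, (i < N)%N && (nu (gs i * Q ^+ i)%R == m) -> (i <= N)%N.
  by move=> i /andP[/ltnW].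
case: (ex_maxnP exP bnd) => i1 /andP[i1N /eqP hi1] i1max.
have g10 : (gs i1 != 0)%R.
  by apply/eqP => g0; move: mfin; rewrite -hi1 g0 mul0r (nu0 Hv) eqxx.
set x := (w (gs i1) + i1%:R * w Q)%R.
have mx : m = x%:E by rewrite -hi1 nu_dig (nuE' g10) -EFinD.
have key : forall i : 'I_N, i != Ordinal i1N ->
    x%:E < nu (qexp Q (gs i * (Q + h) ^+ i) i1 * Q ^+ i1)%R.
  move=> i ni; have [gi0|gi0] := eqVneq (gs i) 0%R.
    by rewrite gi0 !mul0r qexp0p mul0r (nu0 Hv) ltey.
  have hmi := mle i (ltn_ord i); rewrite mx nu_dig (nuE' gi0) -EFinD lee_fin in hmi.
  have [lt|gt] := ltnP i i1.
    have [_ Hb _] := digits i (sgs i) gi0.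
    rewrite nu_dig; apply: le_lt_trans (lte_leD _ (Hb _ lt) (lexx _)) => //.
    by rewrite -EFinD lee_fin /L; lra.
  have gt' : (i1 < i)%N.
    by rewrite ltn_neqAle gt andbT; apply: contraNneq ni => e; apply/eqP/val_inj.
  apply: lt_le_trans (trunc_le _ _); rewrite Sterm //.
  rewrite lt_neqAle -mx mle ?ltn_ord // andbT.
  apply/negP => /eqP ex; have := i1max i; rewrite ltn_ord -ex eqxx => /(_ isT).
  by rewrite leqNgt gt'.
apply: le_trans (trunc_le _ i1) _.
rewrite qexp_sum (bigD1 (Ordinal i1N)) //= mulrDl.
have [_ _ Hc] := digits i1 (sgs i1) g10.
set A := qexp Q (gs i1 * (Q + h) ^+ i1) i1.
rewrite -[A](subrK (gs i1)) mulrDl addrAC addrC.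
rewrite (nu_strict Hv) ?hi1 // mx; apply: (slbD Hv).
  by rewrite nu_dig /x EFinD; apply: lte_leD.
by rewrite big_distrl /=; apply: (slb_sum Hv) => i; apply: key.
Qed.

End Dig.

End F.
Import F.

Local Open Scope ring_scope.
Local Open Scope ereal_scope.

Theorem lemma2p2 (K : fieldType) (R : realType) (nu : {poly K} -> \bar R)
  (n : nat) (Q Q' f : {poly K}) :
  is_valuation nu -> (1 <= n)%N ->
  key_poly nu Q -> key_poly nu Q' ->
  size Q = n.+1 -> size Q' = n.+1 ->
  nu Q < nu Q' ->
  trunc nu Q f = \big[mine/+oo]_(i < size f) trunc nu Q (qexp Q' f i * Q' ^+ i)%R.
Proof.
move=> Hv Hn HQk HQk' HQs HQs' hlt.
set h := (Q' - Q)%R.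
have eQ' : Q' = (Q + h)%R by rewrite /h addrC subrK.
have sh : (size h <= n)%N.
  apply/leq_sizeP => j hj; rewrite /h coefB.
  have [->|jn] := eqVneq j n.
    have l1 : Q'`_n = 1%R by case: HQk' => /monicP; rewrite /lead_coef HQs'.
    have l2 : Q`_n = 1%R by case: HQk => /monicP; rewrite /lead_coef HQs.
    by rewrite l1 l2 subrr.
  have jn' : (n < j)%N by rewrite ltn_neqAle eq_sym jn hj.
  by rewrite !nth_default ?subrr // ?HQs ?HQs'.
have h0 : (h != 0)%R.
  by apply/eqP => e0; move: hlt; rewrite eQ' e0 addr0 ltxx.
have Q0 : (Q != 0)%R by rewrite -size_poly_eq0 HQs.
have hwh : (C.w nu Q <= C.w nu h)%R.
  rewrite -lee_fin -(nuEfin Hv h0) -(nuEfin Hv Q0).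
  by rewrite /h; apply: (lbB Hv) => //; apply: ltW.
have sg : forall i, (size (qexp Q' f i) <= n)%N by move=> i; exact: (size_qexp HQs').
rewrite {1}(recon HQs' Hn f).
have E : forall (g : {poly K}) i, (g * Q' ^+ i = g * (Q + h) ^+ i)%R by move=> g i; rewrite eQ'.
under eq_bigr do rewrite E.
under [in RHS]eq_bigr do rewrite E.
rewrite (Gsum Hv HQk HQs Hn sh h0 hwh _ sg).
by apply: eq_bigr => i _; rewrite (Sterm Hv HQk HQs Hn sh h0 hwh).
Qed.
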